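(* Let $l$ be a prime number, let $\mathcal{T}_l\cong\prod_{k\in\mathbb{N}}\mathbb{Z}/l^k\mathbb{Z}$, let $A$ be a finite abelian $l$-group, and let $\mathcal{D}$ be a pro-$l$ abelian group with an exact sequence of pro-$l$ abelian groups $0\to\mathcal{T}_l\to\mathcal{D}\xrightarrow{\pi} A\to 0$ such that the topological closure of the torsion subgroup of $\mathcal{D}$ equals the image of $\mathcal{T}_l$. Let $X^{\vee}=\mathrm{Hom}_{cont}(X,\mathbb{R}/\mathbb{Z})$ denote the Pontryagin dual, and regard $A^{\vee}$ as a subgroup of $\mathcal{D}^{\vee}$ via the injection $\pi^{\vee}$. Then for every non-zero $x\in A^{\vee}$ and every natural number $n$ there exists $c_x\in\mathcal{D}^{\vee}$ with $l^n c_x=x$. *)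

(* Defs.v *)
From HB Require Import structures.
From mathcomp Require Import all_boot all_order all_algebra.
From mathcomp Require Import all_classical all_reals all_analysis.
Set Implicit Arguments. Unset Strict Implicit. Unset Printing Implicit Defensive.
Import Order.TTheory GRing.Theory Num.Theory.
Local Open Scope classical_set_scope.
Local Open Scope ring_scope.

(* Factors indexed by k : nat stand for Z/l^(k+1)Z (the factor Z/l^0Z = 0 is
   trivial, and 'Z_1 would NOT be the trivial group in MathComp). *)
Definition Tl (l : nat) : Type :=
  prod_topology (fun k : nat => discrete_topology 'Z_(l ^ k.+1)).

Definition Tl_add (l : nat) (x y : Tl l) : Tl l :=
  fun k => ((x k : 'Z_(l ^ k.+1)) + (y k : 'Z_(l ^ k.+1)))%R.

Definition eqmodZ {R : realType} (a b : R) : Prop :=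
  exists z : int, a - b = z%:~R.

(* a map D -> R/Z (given by a representative D -> R) is continuous for the
   quotient (metric) topology of R/Z *)
Definition continuous_modZ {R : realType} {T : topologicalType} (f : T -> R)
  : Prop :=
  forall (x : T) (e : R), 0 < e ->
    \forall y \near x, exists z : int, `|f y - f x - z%:~R| < e.

(* elements of the Pontryagin dual Hom_cont(D, R/Z), via representatives *)
Definition is_character {R : realType} (D : topologicalZmodType) (f : D -> R)
  : Prop :=
  (forall x y : D, eqmodZ (f (x + y)) (f x + f y)) /\ continuous_modZ f.

(* elements of Hom(A, R/Z) for a finite (discrete) group A *)
Definition is_fin_character {R : realType} (A : finZmodType) (f : A -> R)
  : Prop :=
  forall x y : A, eqmodZ (f (x + y)) (f x + f y).

Definition is_subgroup (G : zmodType) (H : set G) : Prop :=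
  H 0 /\ (forall x y, H x -> H y -> H (x - y)).

Definition has_index (G : zmodType) (H : set G) (m : nat) : Prop :=
  exists f : G -> 'I_m, (forall i, exists x, f x = i) /\
    (forall x y, f x = f y <-> H (x - y)).

Definition is_pro_l (l : nat) (D : topologicalZmodType) : Prop :=
  [/\ hausdorff_space D, compact [set: D],
      (forall U : set D, nbhs (0 : D) U ->
          exists H : set D, [/\ is_subgroup H, open H & H `<=` U]) &
      (forall H : set D, is_subgroup H -> open H ->
          exists n : nat, has_index H (l ^ n))].

Definition torsion (D : zmodType) : set D :=
  [set d | exists m : nat, (0 < m)%N /\ d *+ m = 0].

(* Main.v *)
Set Warnings "-notation-overridden,-ambiguous-paths,-notation-incompatible-prefix,-deprecated".
Require Import Defs.
From HB Require Import structures.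
From mathcomp Require Import all_boot all_order all_algebra.
From mathcomp Require Import all_classical all_reals all_analysis.
From mathcomp Require Import ring lra.
Import Order.TTheory GRing.Theory Num.Theory.
Local Open Scope classical_set_scope.
Local Open Scope ring_scope.

Lemma eqZ_refl {R : realType} (a : R) : eqmodZ a a.
Proof. by exists 0; rewrite subrr. Qed.

Lemma eqZ_sym {R : realType} {a b : R} : eqmodZ a b -> eqmodZ b a.
Proof. by move=> [z hz]; exists (- z); rewrite intrN -hz opprB. Qed.

Lemma eqZ_trans {R : realType} {a b c : R} :
  eqmodZ a b -> eqmodZ b c -> eqmodZ a c.
Proof.
move=> [z1 h1] [z2 h2]; exists (z1 + z2); rewrite intrD -h1 -h2.
by rewrite addrA subrK.
Qed.

Lemma eqZ_add {R : realType} {a b c d : R} :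
  eqmodZ a b -> eqmodZ c d -> eqmodZ (a + c) (b + d).
Proof.
move=> [z1 h1] [z2 h2]; exists (z1 + z2); rewrite intrD -h1 -h2.
by rewrite opprD addrACA.
Qed.

Lemma eqZ_opp {R : realType} {a b : R} :
  eqmodZ a b -> eqmodZ (- a) (- b).
Proof. by move=> [z hz]; exists (- z); rewrite intrN -hz opprB opprK addrC. Qed.

Lemma eqZ_sub {R : realType} {a b c d : R} :
  eqmodZ a b -> eqmodZ c d -> eqmodZ (a - c) (b - d).
Proof. by move=> h1 h2; apply: eqZ_add => //; apply: eqZ_opp. Qed.

Lemma eqZ_mulz {R : realType} (i : int) (a b : R) :
  eqmodZ a b -> eqmodZ (i%:~R * a) (i%:~R * b).
Proof. by move=> [z hz]; exists (i * z); rewrite intrM -hz mulrBr. Qed.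

Lemma eqZ_int {R : realType} (z : int) : eqmodZ (z%:~R : R) 0.
Proof. by exists z; rewrite subr0. Qed.

Lemma eqZ_eq {R : realType} (a b : R) : a = b -> eqmodZ a b.
Proof. by move=> ->; apply: eqZ_refl. Qed.

Lemma sg0 {G : zmodType} {H : set G} : is_subgroup H -> H 0.
Proof. by case. Qed.

Lemma sgB {G : zmodType} {H : set G} {x y} : is_subgroup H -> H x -> H y -> H (x - y).
Proof. by case=> _ h; apply: h. Qed.

Lemma sgN {G : zmodType} {H : set G} {x} : is_subgroup H -> H x -> H (- x).
Proof. by move=> sH hx; rewrite -sub0r; apply: sgB => //; apply: sg0. Qed.

Lemma sgD {G : zmodType} {H : set G} {x y} : is_subgroup H -> H x -> H y -> H (x + y).
Proof. by move=> sH hx hy; rewrite -[y]opprK; apply: sgB => //; apply: sgN. Qed.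

Lemma sgMn {G : zmodType} {H : set G} {x} m : is_subgroup H -> H x -> H (x *+ m).
Proof.
move=> sH hx; elim: m => [|m IH]; first by rewrite mulr0n; apply: sg0.
by rewrite mulrS; apply: sgD.
Qed.

Lemma sgMz {G : zmodType} {H : set G} {x} (i : int) : is_subgroup H -> H x -> H (x *~ i).
Proof.
move=> sH hx; case: i => m; first by apply: sgMn.
by rewrite NegzE mulrNz; apply: sgN => //; apply: sgMn.
Qed.

Lemma sgI (G : zmodType) (H K : set G) :
  is_subgroup H -> is_subgroup K -> is_subgroup (H `&` K).
Proof.
move=> sH sK; split; first by split; apply: sg0.
by move=> x y [? ?] [? ?]; split; apply: sgB.
Qed.

Definition homH {R : realType} {G : zmodType} {H : set G} {phi : G -> R} :=
  forall x y, H x -> H y -> eqmodZ (phi (x + y)) (phi x + phi y).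
Arguments homH {R G}.

Lemma homH0 {R : realType} {G : zmodType} {H : set G} {phi : G -> R} :
  is_subgroup H -> homH H phi -> eqmodZ (phi 0) 0.
Proof.
move=> sH hphi; have := hphi 0 0 (sg0 sH) (sg0 sH); rewrite addr0 => -[z hz].
by exists (- z); rewrite intrN -hz; ring.
Qed.

Lemma homHB {R : realType} {G : zmodType} {H : set G} {phi : G -> R} {x y} :
  is_subgroup H -> homH H phi -> H x -> H y ->
  eqmodZ (phi (x - y)) (phi x - phi y).
Proof.
move=> sH hphi hx hy.
have := hphi (x - y) y (sgB sH hx hy) hy; rewrite subrK => -[z hz].
by exists (- z); rewrite intrN -hz; ring.
Qed.

Lemma homHMn {R : realType} {G : zmodType} {H : set G} {phi : G -> R} x m :
  is_subgroup H -> homH H phi -> H x -> eqmodZ (phi (x *+ m)) (m%:R * phi x).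
Proof.
move=> sH hphi hx; elim: m => [|m IH].
  by rewrite mulr0n mul0r; apply: homH0 hphi.
rewrite mulrS; apply: eqZ_trans (hphi _ _ hx (sgMn m sH hx)) _.
rewrite -[m.+1]addn1 natrD mulrDl mul1r [X in eqmodZ _ X]addrC.
by apply: eqZ_add => //; apply: eqZ_refl.
Qed.

Lemma homHMz {R : realType} {G : zmodType} {H : set G} {phi : G -> R} x (i : int) :
  is_subgroup H -> homH H phi -> H x -> eqmodZ (phi (x *~ i)) (i%:~R * phi x).
Proof.
move=> sH hphi hx; case: i => m; first exact: (homHMn _ _ sH hphi hx).
have -> : x *~ Negz m = 0 - x *+ m.+1 by rewrite NegzE mulrNz sub0r.
have -> : (Negz m)%:~R = - (m.+1%:R : R) by rewrite NegzE intrN.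
rewrite mulNr.
apply: eqZ_trans (homHB sH hphi (sg0 sH) (sgMn m.+1 sH hx)) _.
rewrite -[X in eqmodZ _ X]sub0r; apply: eqZ_sub; first by apply: homH0 hphi.
exact: (homHMn _ _ sH hphi hx).
Qed.

Lemma grp_id {G : zmodType} (x y z : G) : (x + y - z) - x = y - z.
Proof. by rewrite addrC !addrA addNr add0r. Qed.

Lemma extend1 {R : realType} {G : zmodType} (U : set G) (N : nat) (f : G -> 'I_N)
  (hf : forall x y, f x = f y <-> U (x - y)) (H : set G) (phi : G -> R) (g : G) :
  is_subgroup H -> U `<=` H -> homH H phi -> ~ H g ->
  exists (H' : set G) (phi' : G -> R), [/\ is_subgroup H', H `<=` H', H' g,
     homH H' phi' & forall h, H h -> eqmodZ (phi' h) (phi h)].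
Proof.
move=> sH UH hphi Hg.
have [k0 [k0pos Hk0]] : exists k, (0 < k)%N /\ H (g *+ k).
  pose F (i : 'I_N.+1) := f (g *+ i).
  have : ~ injective F by move=> /leq_card; rewrite !card_ord ltnn.
  move=> /existsNP [i /existsNP [j /not_implyP [Fij nij]]].
  case: (ltngtP i j) => [ij|ji|ij].
  - exists (j - i)%N; split; first by rewrite subn_gt0.
    apply: UH; rewrite mulrnBr ?(ltnW ij) //; apply/hf; exact: esym.
  - exists (i - j)%N; split; first by rewrite subn_gt0.
    apply: UH; rewrite mulrnBr ?(ltnW ji) //; apply/hf; exact: Fij.
  - by exfalso; apply: nij; apply: val_inj.
pose P := fun k => (0 < k)%N && `[< H (g *+ k) >].
have exP : exists k, P k by exists k0; rewrite /P k0pos; apply/asboolP.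
case: (ex_minnP exP) => k /andP [kpos /asboolP Hk] kmin.
have kdiv : forall i : int, H (g *~ i) -> exists q : int, i = q * k%:Z.
  move=> i Hi; exists (i %/ k)%Z.
  have kz : 0 < k%:Z by rewrite ltz_nat.
  have e := divz_eq i k%:Z.
  have r0 := modz_ge0 i (lt0r_neq0 kz).
  have r1 := ltz_pmod i kz.
  set q := (i %/ k)%Z in e *; set r := (i %% k)%Z in e r0 r1 *.
  have [r' hr'] : exists r' : nat, r = r'%:Z by exists `|r|%N; rewrite gez0_abs.
  have Hr : H (g *~ r'%:Z).
    have -> : g *~ r'%:Z = g *~ i - (g *+ k) *~ q.
      rewrite pmulrn -mulrzA -mulrzBr; congr (_ *~ _).
      by rewrite -hr' e; ring.
    exact: (sgB sH Hi (sgMz q sH Hk)).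
  have r'lt : (r' < k)%N by rewrite -ltz_nat -hr'.
  case: r' hr' Hr r'lt => [|r'] hr' Hr r'lt.
    by rewrite {1}e hr' addr0.
  have := kmin r'.+1; rewrite /P /=.
  have -> : `[< H (g *+ r'.+1) >] = true by apply/asboolP.
  by move=> /(_ isT); rewrite leqNgt r'lt.
pose a := phi (g *+ k) / k%:R.
have kR : (k%:R : R) != 0 by rewrite pnatr_eq0 -lt0n.
have wd : forall h1 h2 j1 j2, H h1 -> H h2 -> h1 + g *~ j1 = h2 + g *~ j2 ->
    eqmodZ (phi h1 + j1%:~R * a) (phi h2 + j2%:~R * a).
  move=> h1 h2 j1 j2 H1 H2 e.
  have Hd : H (g *~ (j2 - j1)).
    have -> : g *~ (j2 - j1) = h1 - h2.
      by rewrite mulrzBr -(addrK (g *~ j1) h1) e grp_id.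
    exact: sgB.
  have [q hq] := kdiv _ Hd.
  have ed : h1 - h2 = (g *+ k) *~ q.
    rewrite pmulrn mulrzA_C -hq mulrzBr.
    by rewrite -(addrK (g *~ j1) h1) e grp_id.
  have c1 := homHB sH hphi H1 H2.
  rewrite ed in c1.
  have c2 := homHMz _ q sH hphi Hk.
  have [z hz] := eqZ_trans (eqZ_sym c1) c2.
  exists z; rewrite -hz.
  have ej : (j2%:~R : R) = j1%:~R + q%:~R * k%:R.
    by rewrite -[k%:R]/((k%:Z)%:~R : R) -intrM -hq intrB; ring.
  by rewrite ej /a; field.
pose Q (y : G) (p : G * int) := (exists h j, H h /\ y = h + g *~ j) ->
  H p.1 /\ y = p.1 + g *~ p.2.
have [sel hsel] : {sel : G -> G * int & forall y, Q y (sel y)}.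
  apply: (@choice _ _ Q) => y.
  have [[h [j [Hh ->]]]|no] := pselect (exists h j, H h /\ y = h + g *~ j).
    by exists (h, j).
  by exists (0, 0) => hh; exfalso; apply: no.
pose H' := fun y => exists h j, H h /\ y = h + g *~ j.
exists (fun y : G => exists h j, H h /\ y = h + g *~ j); exists (fun y => phi (sel y).1 + (sel y).2%:~R * a); split.
- split; first by exists 0, 0; split; [exact: sg0 | rewrite mulr0z addr0].
  move=> _ _ [h1 [j1 [H1 ->]]] [h2 [j2 [H2 ->]]].
  exists (h1 - h2), (j1 - j2); split; first exact: sgB.
  by rewrite mulrzBr opprD addrACA.
- by move=> h Hh; exists h, 0; split => //; rewrite mulr0z addr0.
- by exists 0, 1; split; [exact: sg0 | rewrite add0r].
- move=> y1 y2 hy1 hy2.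
  have hy12 : H' (y1 + y2).
    case: hy1 => [h1 [j1 [H1 ->]]]; case: hy2 => [h2 [j2 [H2 ->]]].
    exists (h1 + h2), (j1 + j2); split; first exact: sgD.
    by rewrite mulrzDr addrACA.
  case: (hsel y1 hy1) => [S1 E1]; case: (hsel y2 hy2) => [S2 E2].
  case: (hsel _ hy12) => [S3 E3].
  have eq : (sel (y1 + y2)).1 + g *~ (sel (y1 + y2)).2 =
      ((sel y1).1 + (sel y2).1) + g *~ ((sel y1).2 + (sel y2).2).
    by rewrite -E3 mulrzDr addrACA -E1 -E2.
  have h := wd _ _ _ _ S3 (sgD sH S1 S2) eq.
  apply: (eqZ_trans h); apply: eqZ_trans (eqZ_add (hphi _ _ S1 S2) (eqZ_refl _)) _.
  by apply: eqZ_eq; rewrite intrD; ring.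
- move=> h Hh.
  have hh : H' h by exists h, 0; split => //; rewrite mulr0z addr0.
  case: (hsel h hh) => [S E].
  have eq : (sel h).1 + g *~ (sel h).2 = h + g *~ 0 by rewrite -E mulr0z addr0.
  by have := wd _ _ _ _ S Hh eq; rewrite mul0r addr0.
Qed.

Lemma extend {R : realType} {G : zmodType} (U : set G) (N : nat) (f : G -> 'I_N)
  (hf : forall x y, f x = f y <-> U (x - y)) :
  forall k (H : set G) (phi : G -> R), is_subgroup H -> U `<=` H ->
  (#|[set i : 'I_N | ~~ `[< exists h, H h /\ f h = i >]]%SET| <= k)%N ->
  homH H phi ->
  exists c : G -> R, homH setT c /\ forall h, H h -> eqmodZ (c h) (phi h).
Proof.
elim=> [|k IH] H phi sH UH hk hphi;
  (have [allH|/existsNP [g Hg]] := pselect (forall y, H y);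
   [by exists phi; split => [x y _ _|h _]; [exact: hphi | exact: eqZ_refl]|]);
  (have gin : f g \in [set i : 'I_N | ~~ `[< exists h, H h /\ f h = i >]]%SET;
   [rewrite inE; apply/asboolPn => -[h [Hh fh]]; apply: Hg;
    have Uhg := (hf h g).1 fh;
    by rewrite -(subKr h g); apply: sgB => //; apply: UH|]).
  by move: hk; rewrite leqn0 cards_eq0 => /eqP E; rewrite E inE in gin.
have [H' [phi' [sH' HH' H'g hphi' eqp]]] := @extend1 R G U N f hf H phi g sH UH hphi Hg.
have sub : [set i : 'I_N | ~~ `[< exists h, H' h /\ f h = i >]]%SET \subset
    ([set i : 'I_N | ~~ `[< exists h, H h /\ f h = i >]] :\ f g)%SET.
  apply/fintype.subsetP => i; rewrite !inE => /asboolPn nH'; apply/andP; split.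
    by apply/eqP => ei; apply: nH'; exists g; split => //; rewrite ei.
  by apply/asboolPn => -[h [Hh fh]]; apply: nH'; exists h; split => //; exact: HH'.
have hk' : (#|[set i : 'I_N | ~~ `[< exists h, H' h /\ f h = i >]]%SET| <= k)%N.
  apply: leq_trans (subset_leq_card sub) _.
  by move: hk; rewrite (cardsD1 (f g)) gin.
have [c [hc ceq]] := IH H' phi' sH' (subset_trans UH HH') hk' hphi'.
exists c; split => // h Hh.
exact: eqZ_trans (ceq h (HH' h Hh)) (eqp h Hh).
Qed.

Lemma grpB2 {G : zmodType} (y a b : G) : (y - b) - (y - a) = a - b.
Proof. by rewrite opprB addrC addrA subrK. Qed.

Lemma grpB4 {G : zmodType} (a b c d : G) : (a - b) - (c - d) = (a - c) - (b - d).
Proof. by rewrite !opprB [in LHS]addrACA [in RHS]addrACA [- c + _]addrC. Qed.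

Lemma sgT {G : zmodType} : is_subgroup [set: G].
Proof. by split. Qed.

Lemma nbhs_shift {M : topologicalZmodType} (V : set M) (p : M) :
  open V -> V 0 -> nbhs p [set y | V (y - p)].
Proof.
move=> oV V0.
have hc : (fun y => y - p) @ nbhs p --> (p - p).
  apply: (@continuous_comp _ _ _ (fun y => (y, p)) (fun x : M * M => x.1 - x.2)).
    by apply: cvg_pair; [exact: cvg_id | exact: cvg_cst].
  exact: sub_continuous.
rewrite subrr in hc; apply: hc.
exact: open_nbhs_nbhs.
Qed.

Theorem lemma1 (R : realType) (l : nat) (hl : prime l)
  (A : finZmodType) (hA : l.-nat #|A|)
  (D : topologicalZmodType) (hD : is_pro_l l D)
  (iota : Tl l -> D) (pi : D -> A)
  (iota_add : forall x y, iota (Tl_add x y) = iota x + iota y)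
  (iota_cont : continuous iota)
  (iota_inj : injective iota)
  (pi_add : {morph pi : x y / x + y})
  (pi_cont : forall a : A, open (pi @^-1` [set a]))
  (pi_surj : forall a : A, exists d : D, pi d = a)
  (exact_mid : forall d : D, pi d = 0 <-> exists t : Tl l, iota t = d)
  (htors : closure (@torsion D) = range iota)
  (x : A -> R) (hx : is_fin_character x) (hx0 : exists a : A, ~ eqmodZ (x a) 0)
  (n : nat) :
  exists c : D -> R, is_character c /\
    forall d : D, eqmodZ ((l ^ n)%:R * c d) (x (pi d)).
Proof.
set m := (l ^ n)%N.
have m0 : (0 < m)%N by rewrite expn_gt0 prime_gt0.
case: hD => hsep hcomp hbase hidx.
pose T := [set y : D | pi y = 0].
have pi0 : pi 0 = 0.
  have h := pi_add 0 0; rewrite addr0 in h.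
  by apply: (addrI (pi 0)); rewrite -h addr0.
have piB : forall a b, pi (a - b) = pi a - pi b.
  by move=> a b; have := pi_add (a - b) b; rewrite subrK => ->; rewrite addrK.
have sT : is_subgroup T.
  by split; [exact: pi0 | move=> a b ha hb; rewrite /T /= piB ha hb subrr].
have oT : open T by exact: (pi_cont 0).
have [H0 [sH0 oH0 H0T]] : exists H0 : set D,
    [/\ is_subgroup H0, open H0 & forall g, H0 (g *+ m) -> T g].
  apply: contrapT => hno.
  have hS : forall H : set D, is_subgroup H /\ open H ->
      exists g, H (g *+ m) /\ ~ T g.
    move=> H [sH oH]; apply: contrapT => hg; apply: hno; exists H; split => //.
    by move=> g Hg; apply: contrapT => nT; apply: hg; exists g.
  pose Dset := [set H : set D | is_subgroup H /\ open H].
  pose B := fun H : set D => [set g | H (g *+ m) /\ ~ T g].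
  have FF : ProperFilter (filter_from Dset B).
    apply: filter_from_proper; last by move=> H /hS [g hg]; exists g.
    apply: filter_from_filter; first by exists setT; split; [exact: sgT | exact: openT].
    move=> H1 H2 [s1 o1] [s2 o2]; exists (H1 `&` H2).
      by split; [exact: sgI | exact: openI].
    by move=> g [[h1 h2] nT]; split; split.
  have [p [_ clp]] := hcomp _ FF filterT.
  have FB : forall H, is_subgroup H -> open H -> filter_from Dset B (B H).
    by move=> H sH oH; exists H.
  have nTp : ~ T p.
    move=> Tp.
    have [g [[_ nT] Tg]] := clp _ _ (FB _ sgT openT) (open_nbhs_nbhs (conj oT Tp)).
    exact: nT.
  have Hp : forall H, is_subgroup H -> open H -> H (p *+ m).
    move=> H sH oH.
    have [g [[Hg _] Hgp]] := clp _ _ (FB _ sH oH) (nbhs_shift H p oH (sg0 sH)).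
    have -> : p *+ m = g *+ m - (g - p) *+ m by rewrite mulrnBl subKr.
    exact: (sgB sH Hg (sgMn m sH Hgp)).
  have pm0 : p *+ m = 0.
    apply: esym; apply: hsep => P Q nP nQ.
    have [H [sH oH HP]] := hbase P nP.
    exists (p *+ m); split; [exact: HP (Hp H sH oH) | exact: nbhs_singleton nQ].
  apply: nTp.
  have : closure (@torsion D) p by apply: subset_closure; exists m; split.
  rewrite htors => -[t _ ht].
  by apply/exact_mid; exists t.
pose U := H0 `&` T.
have sU : is_subgroup U by exact: sgI.
have oU : open U by exact: openI.
have [N' [fU [_ hfU]]] := hidx U sU oU.
pose Hs := [set y : D | exists d, U (y - d *+ m)].
have key : forall y d d', U (y - d *+ m) -> U (y - d' *+ m) -> pi d = pi d'.
  move=> y d d' h1 h2.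
  have h := sgB sU h2 h1; rewrite grpB2 -mulrnBl in h.
  have := H0T _ h.1; rewrite /T /= piB => /eqP; rewrite subr_eq0 => /eqP.
  done.
have [sel hsel] : {sel : D -> D & forall y, Hs y -> U (y - (sel y) *+ m)}.
  apply: (@choice _ _ (fun y d => Hs y -> U (y - d *+ m))) => y.
  have [[d hd]|no] := pselect (Hs y); first by exists d.
  by exists 0 => hy; exfalso; apply: no.
pose phi y := x (pi (sel y)).
have sHs : is_subgroup Hs.
  split; first by exists 0; rewrite mul0rn subr0; exact: sg0.
  move=> y1 y2 [d1 h1] [d2 h2]; exists (d1 - d2).
  by rewrite mulrnBl grpB4; exact: sgB.
have UHs : U `<=` Hs by move=> y Uy; exists 0; rewrite mul0rn subr0.
have hphi : homH Hs phi.
  move=> y1 y2 hy1 hy2.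
  have hy12 : Hs (y1 + y2) by exact: sgD.
  have e : pi (sel (y1 + y2)) = pi (sel y1 + sel y2).
    apply: (key (y1 + y2)); first exact: hsel.
    have -> : (y1 + y2) - (sel y1 + sel y2) *+ m =
        (y1 - sel y1 *+ m) + (y2 - sel y2 *+ m) by rewrite mulrnDl opprD addrACA.
    exact: (sgD sU (hsel _ hy1) (hsel _ hy2)).
  by rewrite /phi e pi_add; exact: hx.
have [c [hc ceq]] := @extend R D U _ fU hfU _ Hs phi sHs UHs (leqnn _) hphi.
have x0 : eqmodZ (x 0) 0.
  by apply: (@homH0 R A setT x sgT) => a b _ _; exact: hx.
exists c; split; first split.
- by move=> a b; exact: hc.
- move=> x1 e e0; apply: filterS (nbhs_shift U x1 oU (sg0 sU)) => y Uy.
  have c1 := homHB sgT hc (I : setT y) (I : setT x1).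
  have c2 := ceq _ (UHs _ Uy).
  have e3 : pi (sel (y - x1)) = pi 0.
    by apply: (key (y - x1)); [exact: (hsel _ (UHs _ Uy)) | rewrite mul0rn subr0].
  have c3 : eqmodZ (phi (y - x1)) 0 by rewrite /phi e3 pi0; exact: x0.
  have [z hz] := eqZ_trans (eqZ_sym c1) (eqZ_trans c2 c3).
  exists z; rewrite subr0 in hz; by rewrite hz subrr normr0.
- move=> d.
  have hd : Hs (d *+ m) by exists d; rewrite subrr; exact: sg0.
  have c1 := homHMn d m sgT hc I.
  have c2 := ceq _ hd.
  have e3 : pi (sel (d *+ m)) = pi d.
    by apply: (key (d *+ m)); [exact: hsel | rewrite subrr; exact: sg0].
  apply: eqZ_trans (eqZ_sym c1) _; apply: eqZ_trans c2 _.
  by rewrite /phi e3; exact: eqZ_refl.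
Qed.
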